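(* Let $q$ be a prime power and $u\in\mathbb F_{q^3}\setminus\mathbb F_q$. Then the $\mathbb F_q$-subspace $$U=\{(\alpha_0+\alpha_1u,\ \alpha_2+\alpha_3u,\ \alpha_4+\alpha_5u,\ \alpha_6+\alpha_7u) : \alpha_i\in\mathbb F_q\}\subseteq\mathbb F_{q^3}^4$$ is a cutting $[8,4]_{q^3/q}$ system.
   Context: An $[n,k]_{q^m/q}$ system is an $\mathbb F_q$-subspace $U$ of $\mathbb F_{q^m}^k$ with $\dim_{\mathbb F_q}(U)=n$ and $\langle U\rangle_{\mathbb F_{q^m}}=\mathbb F_{q^m}^k$. It is cutting if for every $\mathbb F_{q^m}$-hyperplane $H$ of $\mathbb F_{q^m}^k$ one has $\langle H\cap U\rangle_{\mathbb F_{q^m}}=H$. *)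

(* Defs.v *)
From HB Require Import structures.
From mathcomp Require Import all_boot all_order all_algebra all_field.
Set Implicit Arguments. Unset Strict Implicit. Unset Printing Implicit Defensive.
Import GRing.Theory.
Local Open Scope ring_scope.

(* Vectors of F_{q^m}^k are finite functions 'I_k -> L, where L is a
   field extension of F (= F_q).  {ffun 'I_k -> L} is canonically a
   vectType F (pointwise F-scaling), so F-subspaces are {vspace _}. *)

Section Defs.
Variables (F : fieldType) (L : fieldExtType F) (k : nat).

Definition vecL := {ffun 'I_k -> L}.

Definition Lspan (S : {pred vecL}) (w : vecL) : Prop :=
  exists n (c : 'I_n -> L) (s : 'I_n -> vecL),
    (forall j, s j \in S) /\ w = \sum_(j < n) [ffun i => c j * s j i].

Definition hyperplane (a : vecL) : {pred vecL} :=
  [pred v : vecL | \sum_(i < k) a i * v i == 0].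

Definition is_system (n : nat) (U : {vspace vecL}) : Prop :=
  \dim U = n /\ forall w : vecL, Lspan (mem U) w.

Definition cutting (U : {vspace vecL}) : Prop :=
  forall a : vecL, a != 0 ->
    forall w : vecL,
      Lspan [pred v | (v \in U) && (v \in hyperplane a)] w <-> w \in hyperplane a.
End Defs.

(* The 8 generators: alpha_{2i} goes with 1 in coordinate i,
   alpha_{2i+1} with u in coordinate i. *)
Definition gen8 (F : fieldType) (L : fieldExtType F) (u : L) (j : 'I_8) : vecL L 4 :=
  [ffun i : 'I_4 => if (i == j./2 :> nat) then (if odd j then u else 1) else 0].

Definition U8 (F : fieldType) (L : fieldExtType F) (u : L) : {vspace vecL L 4} :=
  <<[seq gen8 u j | j <- enum 'I_8]>>%VS.

(* Main.v *)
Require Import Defs.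
From HB Require Import structures.
From mathcomp Require Import all_boot all_order all_algebra all_field.
From mathcomp Require Import ring.
From Stdlib Require Import Classical IndefiniteDescription.
Set Implicit Arguments. Unset Strict Implicit. Unset Printing Implicit Defensive.
Import GRing.Theory.
Local Open Scope ring_scope.

Section S.
Variables (F : finFieldType) (L : fieldExtType F).
Variable u : L.
Hypothesis hu : u \notin 1%VS.

Lemma indep (a b : F) : a *: 1 + b *: u = 0 -> a = 0 /\ b = 0.
Proof.
move=> h.
have hb : b = 0.
  apply/eqP; apply/negPn/negP => nb; case/negP: hu.
  have -> : u = (- (b^-1 * a)) *: (1 : L).
    apply: (scalerI nb); rewrite scalerA mulrN mulrA mulfV // mul1r scaleNr.
    by apply/eqP; rewrite -addr_eq0 addrC h.
  by apply/vlineP; eexists.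
split=> //; move: h; rewrite hb scale0r addr0 => /eqP.
by rewrite scaler_eq0 oner_eq0 orbF => /eqP.
Qed.

Definition ev (c : 'I_4) : 'I_8 := @Ordinal 8 (c.*2) ltac:(by case: c => [[|[|[|[|]]]]]).
Definition od (c : 'I_4) : 'I_8 := @Ordinal 8 (c.*2.+1) ltac:(by case: c => [[|[|[|[|]]]]]).
Definition delta (i : 'I_4) (x : L) : vecL L 4 := [ffun k => if k == i then x else 0].

Lemma gen_ev c : gen8 u (ev c) = delta c 1.
Proof.
apply/ffunP=> k; rewrite !ffunE /= doubleK odd_double.
by [].
Qed.

Lemma gen_od c : gen8 u (od c) = delta c u.
Proof.
apply/ffunP=> k; rewrite !ffunE /= uphalf_double odd_double /=.
by [].
Qed.


Lemma gen_in j : gen8 u j \in U8 u.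
Proof. by apply: memv_span; apply: map_f; rewrite mem_enum. Qed.

Lemma delta_in i (a b : F) : delta i (a *: 1 + b *: u) \in U8 u.
Proof.
have -> : delta i (a *: 1 + b *: u) = a *: gen8 u (ev i) + b *: gen8 u (od i).
  apply/ffunP=> k; rewrite gen_ev gen_od !ffunE.
  by case: (k == i); rewrite ?scaler0 ?addr0.
by rewrite memvD // memvZ // gen_in.
Qed.

Lemma sum_gen (k : 'I_8 -> F) (c : 'I_4) :
  (\sum_(j < 8) k j *: gen8 u j) c = k (ev c) *: 1 + k (od c) *: u.
Proof.
rewrite sum_ffunE (bigD1 (ev c)) //= (bigD1 (od c)) /=; last first.
  by rewrite -val_eqE /= -addn1 -{2}[c.*2]addn0 eqn_add2l.
rewrite big1 ?addr0; last first.
  move=> j /andP[hj1 hj2]; rewrite !ffunE.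
  case: eqP => [hc|]; last by rewrite scaler0.
  have := odd_double_half j; rewrite -hc.
  case: (odd j) => /= hj.
    by move: hj2; rewrite -val_eqE /= -hj add1n eqxx.
  by move: hj1; rewrite -val_eqE /= -hj add0n eqxx.
by rewrite !ffunE /= doubleK uphalf_double odd_double !eqxx.
Qed.


Lemma dimU8 : \dim (U8 u) = 8%N.
Proof.
pose T := [tuple of map (gen8 u) (ord_tuple 8)].
have hf : free T.
  apply/freeP => k hk i.
  have hk' : \sum_(j < 8) k j *: gen8 u j = 0.
    rewrite -[RHS]hk; apply: eq_bigr => j _.
    by rewrite -(tnth_nth 0) tnth_map tnth_ord_tuple.
  have hi : (i./2 < 4)%N by case: i => [[|[|[|[|[|[|[|[|]]]]]]]]].
  pose c : 'I_4 := Ordinal hi.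
  have := congr1 (fun f : vecL L 4 => f c) hk'; rewrite sum_gen ffunE => /indep [h1 h2].
  have := odd_double_half i; case: (odd i) => /= hd.
    by have -> : i = od c by apply: val_inj; move: hd; rewrite /= add1n => ->.
  by have -> : i = ev c by apply: val_inj; move: hd; rewrite /= ?add0n => ->.
have hb : basis_of (U8 u) T by rewrite /basis_of hf andbT.
exact: size_basis hb.
Qed.


Lemma key (hL : \dim {:L} = 3%N) (c : L) : exists a b g d : F,
  g *: 1 + d *: u != 0 /\ c * (g *: 1 + d *: u) = a *: 1 + b *: u.
Proof.
pose X := [tuple (1 : L); u; c; c * u].
have nf : ~~ free X.
  apply/negP => hf.
  have hb : basis_of <<X>>%VS X by rewrite /basis_of eqxx hf.
  have := dimvS (subvf <<X>>%VS); rewrite (size_basis hb) hL.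
  by [].
have nP : ~ (forall k : 'I_4 -> F, \sum_(i < 4) k i *: X`_i = 0 -> forall i, k i = 0).
  by move=> h; case/negP: nf; apply/freeP.
have [k hk] := not_all_ex_not _ _ nP.
have [hs hk2] := imply_to_and _ _ hk.
have [i0 hi0] := not_all_ex_not _ _ hk2.
move: hs; rewrite !big_ord_recl big_ord0 /=.
move=> hs.
exists (- k ord0), (- k (lift ord0 ord0)), (k (lift ord0 (lift ord0 ord0))),
  (k (lift ord0 (lift ord0 (lift ord0 ord0)))); split.
  apply/negP => /eqP h0; have [e2 e3] := indep h0.
  move: hs; rewrite e2 e3 !scale0r !add0r addr0 => /indep [e0 e1].
  apply: hk2 => i.
  have : [\/ i = ord0, i = lift ord0 ord0, i = lift ord0 (lift ord0 ord0) |
     i = lift ord0 (lift ord0 (lift ord0 ord0))].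
    case: i => [[|[|[|[|]]]]] hi //.
    - by apply: Or41; apply: val_inj.
    - by apply: Or42; apply: val_inj.
    - by apply: Or43; apply: val_inj.
    - by apply: Or44; apply: val_inj.
  by case=> ->.
rewrite mulrDr -!scalerAr mulr1 !scaleNr; apply/eqP; rewrite -subr_eq0 -hs.
apply/eqP; ring.
Qed.


End S.

Lemma sum_delta (F : finFieldType) (L : fieldExtType F) (a : vecL L 4) j (x : L) :
  \sum_(i < 4) a i * delta j x i = a j * x.
Proof.
rewrite (bigD1 j) //= big1 ?addr0; first by rewrite ffunE eqxx.
by move=> i hi; rewrite ffunE (negbTE hi) mulr0.
Qed.

Unset Implicit Arguments.

Theorem proposition3p13 (F : finFieldType) (L : fieldExtType F)
  (hL : \dim {:L} = 3%N) (u : L) (hu : u \notin 1%VS) :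
  is_system 8 (U8 u) /\ cutting (U8 u).
Proof.
split.
  split; first exact: (@dimU8 _ _ u hu).
  move=> w; exists 4%N, (fun j => w j), (fun j => delta j 1); split.
    by move=> j; have := @delta_in _ _ u j 1 0; rewrite scale1r scale0r addr0.
  apply/ffunP => i; rewrite sum_ffunE (bigD1 i) //= !ffunE eqxx mulr1 big1 ?addr0 //.
  by move=> j hj; rewrite !ffunE eq_sym (negbTE hj) mulr0.
move=> a a0 w; split.
  case=> n [c [s [hs ->]]].
  rewrite /hyperplane inE.
  under eq_bigr => i _ do rewrite sum_ffunE big_distrr.
  rewrite exchange_big /=; apply/eqP; apply: big1 => j _.
  move/andP: (hs j) => [_ hH]; rewrite /hyperplane inE in hH.
  transitivity (c j * \sum_(i < 4) a i * s j i); last by rewrite (eqP hH) mulr0.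
  rewrite big_distrr; apply: eq_bigr => i _.
  by rewrite ffunE mulrCA.
move=> hw.
have hw' : \sum_(i < 4) a i * w i = 0 by move: hw; rewrite /hyperplane inE => /eqP.
have [p hp] : exists p, a p != 0.
  case: (pickP (fun p => a p != 0)) => [p hp|h0]; first by exists p.
  case/negP: a0; apply/eqP/ffunP => i; rewrite ffunE.
  by have := h0 i => /negbFE/eqP.
have Hy : forall j : 'I_4, {y : L | y != 0 /\ (exists g d : F, y = g *: 1 + d *: u)
   /\ (exists al be : F, - (a j / a p) * y = al *: 1 + be *: u)}.
  move=> j; apply: constructive_indefinite_description.
  have [al [be [g [d [hnz he]]]]] := @key _ _ u hu hL (- (a j / a p)).
  exists (g *: 1 + d *: u); split => //; split; first by exists g, d.
  by exists al, be.
pose y j := sval (Hy j).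
have ynz : forall j, y j != 0 by move=> j; rewrite /y; case: (Hy j) => yj [].
exists 4%N, (fun j => w j / y j),
  (fun j => delta j (y j) + delta p (- (a j / a p) * y j)); split.
  move=> j; rewrite inE; apply/andP; split.
    rewrite /y; case: (Hy j) => yj [_ [[g [d hg]] [al [be hb]]]] /=.
    by rewrite hb hg memvD // (@delta_in _ _ u).
  rewrite /hyperplane inE.
  under eq_bigr => i _ do rewrite ffunE mulrDr.
  rewrite big_split /= !sum_delta; apply/eqP; field; exact: hp.
apply/ffunP => i; rewrite sum_ffunE.
have -> : \sum_(j < 4) [ffun i0 => w j / y j *
      (delta j (y j) + delta p (- (a j / a p) * y j)) i0] i =
    \sum_(j < 4) ((if j == i then w j else 0) +
       (if i == p then - (a j * w j) / a p else 0)).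
  apply: eq_bigr => j _; rewrite !ffunE (eq_sym i j).
  have := ynz j; case: (j == i); case: (i == p) => hy;
    rewrite ?addr0 ?add0r ?mulr0 //; field; rewrite ?hy ?hp //.
rewrite big_split /= -big_mkcond big_pred1_eq.
case: (i == p); last by rewrite big1 ?addr0.
by rewrite -mulr_suml sumrN hw' oppr0 mul0r addr0.
Qed.
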